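(* Let $\mathbf A\in\mathbb C^{m\times n}$ with $\operatorname{rank}\mathbf A=r$, where $r<\min\{m,n\}$ or $r=n<m$. Then the projection matrix $\mathbf Q=\mathbf A\mathbf A^{+}\in\mathbb C^{m\times m}$ has entries \[ (\mathbf Q)_{ij}=\frac{q_{ij}}{d_r(\mathbf A\mathbf A^{*})},\qquad q_{ij}=\sum_{\alpha\in I_{r,m}\{j\}}\left|\left((\mathbf A\mathbf A^{*})_{j.}(\mathbf g_{i.})\right)^{\alpha}_{\alpha}\right|,\quad i,j=1,\dots,m,\] where $\mathbf g_{i.}$ is the $i$-th row of $\mathbf A\mathbf A^{*}$.
   Context: $\mathbf A^{+}$ is the Moore–Penrose inverse (unique $\mathbf X$ with $\mathbf A\mathbf X\mathbf A=\mathbf A$, $\mathbf X\mathbf A\mathbf X=\mathbf X$, $(\mathbf A\mathbf X)^{*}=\mathbf A\mathbf X$, $(\mathbf X\mathbf A)^{*}=\mathbf X\mathbf A$). $\mathbf M_{j.}(\mathbf c)$ denotes $\mathbf M$ with its $j$-th row replaced by the row vector $\mathbf c$. $I_{r,m}$ is the set of strictly increasing sequences of $r$ elements of $\{1,\dots,m\}$, $I_{r,m}\{j\}=\{\alpha\in I_{r,m}:j\in\alpha\}$, $\mathbf M^{\alpha}_{\alpha}$ is the principal submatrix indexed by $\alpha$, $|\cdot|$ is the determinant, and $d_r(\mathbf M)=\sum_{\alpha\in I_{r,m}}|\mathbf M^{\alpha}_{\alpha}|$. *)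

(* Defs.v *)
(* Scalars: any numClosedFieldType C (algebraically closed
   field with conjugation, e.g. complex R for R : realType = C). *)
From HB Require Import structures.
From mathcomp Require Import all_boot all_order all_algebra.
Set Implicit Arguments. Unset Strict Implicit. Unset Printing Implicit Defensive.
Import Order.TTheory GRing.Theory Num.Theory.
Local Open Scope ring_scope.

Section Defs.
Variable C : numClosedFieldType.

Definition conjT (m n : nat) (A : 'M[C]_(m, n)) : 'M[C]_(n, m) :=
  (map_mx (fun x => x^*) A)^T.

Definition is_MP_inverse (m n : nat) (A : 'M[C]_(m, n)) (X : 'M[C]_(n, m)) : Prop :=
  [/\ A *m X *m A = A, X *m A *m X = X,
      conjT (A *m X) = A *m X & conjT (X *m A) = X *m A].

Definition row_repl (m n : nat) (M : 'M[C]_(m, n)) (j : 'I_m) (c : 'rV[C]_n)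
  : 'M[C]_(m, n) :=
  \matrix_(k, l) if k == j then c 0 l else M k l.

End Defs.

(* alpha in I_{r,m}: strictly increasing sequence alpha_1 < ... < alpha_r *)
Definition strict_incr (r m : nat) (s : {ffun 'I_r -> 'I_m}) : bool :=
  [forall i : 'I_r, forall j : 'I_r, (i < j)%N ==> (s i < s j)%N].

Definition d_r (C : numClosedFieldType) (r m : nat) (M : 'M[C]_m) : C :=
  \sum_(s : {ffun 'I_r -> 'I_m} | strict_incr s) \det (mxsub s s M).

(* Main.v *)
From HB Require Import structures.
From mathcomp Require Import all_boot all_order all_algebra all_fingroup.
From mathcomp Require Import ring.
Require Import Defs.
Set Implicit Arguments. Unset Strict Implicit. Unset Printing Implicit Defensive.
Import Order.TTheory GRing.Theory Num.Theory.
Lemma filter_iota_lt k x : (x <= k)%N -> [seq i <- iota 0 k | (i < x)%N] = iota 0 x.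
Proof.
move=> hx; rewrite -(subnKC hx) iotaD filter_cat.
rewrite (@eq_in_filter _ _ predT); last by move=> t; rewrite mem_iota => /andP[].
rewrite filter_predT (@eq_in_filter _ _ pred0); last first.
  by move=> t; rewrite mem_iota /= => /andP[ht _]; rewrite ltnNge ht.
by rewrite filter_pred0 cats0.
Qed.

Lemma card_lt k (x : 'I_k) : #|[set t : 'I_k | (t < x)%N]| = x.
Proof.
rewrite cardsE -sum1_card.
rewrite -(big_mkord (fun t => t < x)%N (fun _ => 1%N)).
rewrite -big_filter /index_iota subn0 filter_iota_lt; last exact: ltnW.
by rewrite big_const_seq count_predT size_iota; elim: (nat_of_ord x) => //= n ->.
Qed.


Section Sort.
Variables k m : nat.
Implicit Types (f s : {ffun 'I_k -> 'I_m}) (p : {perm 'I_k}).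

Definition rk f (i : 'I_k) : 'I_k := insubd i #|[set l | (f l < f i)%N]|.
Definition prm f : {perm 'I_k} := insubd (1%g : {perm 'I_k}) ([ffun i => rk f i] : {ffun 'I_k -> 'I_k}).
Definition srt f : {ffun 'I_k -> 'I_m} := [ffun t => f ((prm f)^-1%g t)].
Definition cmp s p : {ffun 'I_k -> 'I_m} := [ffun i => s (p i)].

Lemma rk_val f i : injective f -> val (rk f i) = #|[set l | (f l < f i)%N]|.
Proof.
move=> injf; rewrite val_insubd.
have -> // : (#|[set l | (f l < f i)%N]| < k)%N.
have sub : [set l | (f l < f i)%N] \subset [set~ i].
  by apply/subsetP => l; rewrite !inE; apply: contraTneq => ->; rewrite ltnn.
apply: leq_ltn_trans (subset_leq_card sub) _.
by rewrite cardsC1 card_ord prednK //; apply: leq_ltn_trans (ltn_ord i).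
Qed.

Lemma rk_mono f a b : injective f -> (f a < f b)%N -> (rk f a < rk f b)%N.
Proof.
move=> injf hab; rewrite !rk_val //; apply: proper_card.
apply/properP; split.
  by apply/subsetP => l; rewrite !inE => h; apply: ltn_trans h hab.
by exists a; rewrite !inE ?ltnn.
Qed.

Lemma rk_refl f a b : injective f -> (rk f a < rk f b)%N -> (f a < f b)%N.
Proof.
move=> injf h; case: (ltngtP (f a) (f b)) => // [hba|/val_inj/injf eab].
  by have := rk_mono injf hba; rewrite ltnNge (ltnW h).
by move: h; rewrite eab ltnn.
Qed.

Lemma rk_inj f : injective f -> injective (rk f).
Proof.
move=> injf a b e; apply: (injf); apply: val_inj.
case: (ltngtP (f a) (f b)) => // h; have := rk_mono injf h; by rewrite e ltnn.
Qed.

Lemma prmE f : injective f -> forall i, prm f i = rk f i.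
Proof.
move=> injf i; rewrite -pvalE /prm val_insubd.
have -> : injectiveb [ffun i => rk f i].
  by apply/injectiveP => a b; rewrite !ffunE; apply: rk_inj.
by rewrite ffunE.
Qed.

Lemma cmp_srt f : injective f -> cmp (srt f) (prm f) = f.
Proof. by move=> injf; apply/ffunP => i; rewrite !ffunE permK. Qed.

Lemma srt_strict f : injective f -> strict_incr (srt f).
Proof.
move=> injf; apply/forallP => a; apply/forallP => b; apply/implyP => hab.
rewrite !ffunE; apply: rk_refl => //.
by rewrite -!prmE // !permKV.
Qed.

Lemma strict_mono s a b : strict_incr s -> (s a < s b)%N = (a < b)%N.
Proof.
move=> hs; have H (x y : 'I_k) : (x < y)%N -> (s x < s y)%N.
  by move=> hxy; move/forallP: hs => /(_ x) /forallP /(_ y) /implyP; apply.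
case: (ltngtP a b) => [/H -> //|/H hba|/val_inj -> ]; last by rewrite ltnn.
by apply/negbTE; rewrite -leqNgt ltnW.
Qed.

Lemma strict_inj s : strict_incr s -> injective s.
Proof.
move=> hs a b e; apply: val_inj; case: (ltngtP a b) => // h.
  by move: h; rewrite -(strict_mono _ _ hs) e ltnn.
by move: h; rewrite -(strict_mono _ _ hs) e ltnn.
Qed.

Lemma cmp_inj s p : strict_incr s -> injective (cmp s p).
Proof. by move=> hs a b; rewrite !ffunE => /(strict_inj hs) /perm_inj. Qed.

Lemma prm_cmp s p : strict_incr s -> prm (cmp s p) = p.
Proof.
move=> hs; apply/permP => i; rewrite prmE; last exact: cmp_inj.
apply/eqP; rewrite -val_eqE; apply/eqP.
rewrite rk_val; last exact: cmp_inj.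
have -> : [set l | (cmp s p l < cmp s p i)%N] = p @^-1: [set t : 'I_k | (t < p i)%N].
  by apply/setP => l; rewrite !inE !ffunE strict_mono.
by rewrite card_preimset ?card_lt //; apply: perm_inj.
Qed.

Lemma srt_cmp s p : strict_incr s -> srt (cmp s p) = s.
Proof. by move=> hs; apply/ffunP => t; rewrite !ffunE prm_cmp // permKV. Qed.

End Sort.

Local Open Scope ring_scope.
Section CB.
Variable T : comNzRingType.

Lemma det_mul_expand k m (X : 'M[T]_(k,m)) (Y : 'M[T]_(m,k)) :
  \det (X *m Y) = \sum_(f : {ffun 'I_k -> 'I_m}) (\prod_i X i (f i)) * \det (rowsub f Y).
Proof.
rewrite /determinant.
transitivity (\sum_(s : 'S_k) \sum_(f : {ffun 'I_k -> 'I_m})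
    (-1) ^+ s * ((\prod_i X i (f i)) * \prod_i Y (f i) (s i))).
  apply: eq_bigr => s _; rewrite -big_distrr /=; congr (_ * _).
  rewrite (eq_bigr (fun i => \sum_l X i l * Y l (s i))); last by move=> i _; rewrite mxE.
  rewrite bigA_distr_bigA; apply: eq_bigr => f _; by rewrite big_split.
rewrite exchange_big; apply: eq_bigr => f _ /=; rewrite big_distrr /=.
apply: eq_bigr => s _; rewrite mulrCA; congr (_ * (_ * _)).
by apply: eq_bigr => i _; rewrite mxE.
Qed.

Lemma cauchy_binet k m (X : 'M[T]_(k,m)) (Y : 'M[T]_(m,k)) :
  \det (X *m Y) = \sum_(s : {ffun 'I_k -> 'I_m} | strict_incr s)
      \det (colsub s X) * \det (rowsub s Y).
Proof.
rewrite det_mul_expand (bigID (fun f : {ffun 'I_k -> 'I_m} => injectiveb f)) /=.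
rewrite [X in _ + X]big1 ?addr0; last first.
  move=> f /injectivePn [i1 [i2 Di12 Ef12]].
  by rewrite (determinant_alternate Di12) ?mulr0 // => j; rewrite !mxE Ef12.
rewrite (reindex_onto (fun p : {ffun 'I_k -> 'I_m} * {perm 'I_k} => cmp p.1 p.2)
   (fun f => (srt f, prm f))) /=; last by move=> f /injectiveP; apply: cmp_srt.
rewrite (eq_bigl (fun p => strict_incr p.1 && true)); last first.
  move=> [s p] /=; rewrite andbT; apply/idP/idP.
    by move=> /andP[/injectiveP hi /eqP [<- _]]; apply: srt_strict.
  move=> hs; apply/andP; split; first by apply/injectiveP; apply: cmp_inj.
  by rewrite srt_cmp // prm_cmp.
rewrite -(pair_big_dep (fun s => strict_incr s) (fun _ _ => true)
          (fun s p => (\prod_i X i (cmp s p i)) * \det (rowsub (cmp s p) Y))) /=.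
apply: eq_bigr => s hs.
have E : forall p : {perm 'I_k}, \det (rowsub (cmp s p) Y) = (-1) ^+ p * \det (rowsub s Y).
  move=> p; have -> : rowsub (cmp s p) Y = row_perm p (rowsub s Y).
    by apply/matrixP => i j; rewrite !mxE ffunE.
  by rewrite row_permE det_mulmx det_perm.
under eq_bigr do rewrite E.
rewrite /(determinant (colsub s X)) big_distrl /=; apply: eq_bigr => p _.
rewrite mulrCA mulrA; congr (_ * _ * _).
by apply: eq_bigr => i _; rewrite !mxE ffunE.
Qed.

End CB.
Section LA.
Variable F : numClosedFieldType.

Lemma sylv k (w : 'cV[F]_k) (v : 'rV[F]_k) :
  \det (1%:M + w *m v) = 1 + (v *m w) 0 0.
Proof.
pose M := block_mx (1%:M : 'M[F]_1) v (- w) 1%:M.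
have E1 : M = block_mx 1%:M 0 (- w) 1%:M *m block_mx 1%:M v 0 (1%:M + w *m v).
  rewrite mulmx_block /M !mul1mx !mulmx1 !mul0mx !addr0.
  by rewrite mulNmx addrCA addNr addr0.
have E2 : M = block_mx (1%:M + v *m w) v 0 1%:M *m block_mx 1%:M 0 (- w) 1%:M.
  rewrite mulmx_block /M !mul1mx !mulmx1 !mul0mx !mulmx0 !add0r.
  by rewrite mulmxN addrK.
have := congr1 determinant E2; rewrite {1}E1 !det_mulmx !det_lblock !det_ublock.
by rewrite !det1 !mul1r !mulr1 det_mx11 !mxE eqxx /= mulr1n => ->.
Qed.

Lemma det_rank1 k (K : 'M[F]_k) (u : 'cV_k) (v : 'rV_k) : K \in unitmx ->
  \det (K + u *m v) = \det K * (1 + (v *m invmx K *m u) 0 0).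
Proof.
move=> hK; have -> : K + u *m v = K *m (1%:M + (invmx K *m u) *m v).
  by rewrite mulmxDr mulmx1 !mulmxA mulmxV // mul1mx.
by rewrite det_mulmx sylv mulmxA.
Qed.

Lemma mul_row_repl k m (X : 'M[F]_(k,m)) (Y : 'M[F]_(m,k)) j c :
  X *m row_repl Y j c = X *m Y + col j X *m (c - row j Y).
Proof.
apply/matrixP => p q; rewrite !mxE big_ord1 !mxE.
rewrite (bigD1 j) //= [in RHS](bigD1 j) //= !mxE eqxx.
rewrite (eq_bigr (fun t => X p t * Y t q)); last first.
  by move=> t /negbTE ht; rewrite mxE ht.
by rewrite [ord0]/(0 : 'I_1); ring.
Qed.

Lemma row_repl_mul k m (Y : 'M[F]_(m,k)) (X : 'M[F]_(k,m)) j c :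
  row_repl (Y *m X) j (c *m X) = row_repl Y j c *m X.
Proof.
apply/matrixP => p q; rewrite !mxE; case: (p =P j) => hp; apply: eq_bigr => t _;
  rewrite /row_repl mxE; [by rewrite hp eqxx | by case: eqP].
Qed.

Lemma det_row0 k (M : 'M[F]_k) t : (forall l, M t l = 0) -> \det M = 0.
Proof. by move=> h; rewrite (expand_det_row M t) big1 // => l _; rewrite h mul0r. Qed.

Lemma dr_prod k m (Y : 'M[F]_(m,k)) (X : 'M[F]_(k,m)) :
  d_r k (Y *m X) = \det (X *m Y).
Proof.
rewrite /d_r cauchy_binet; apply: eq_bigr => s _.
by rewrite mxsub_mul det_mulmx mulrC.
Qed.

Lemma num_prod k m (Y : 'M[F]_(m,k)) (X : 'M[F]_(k,m)) (i j : 'I_m) :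
  X *m Y \in unitmx ->
  \sum_(s : {ffun 'I_k -> 'I_m} | strict_incr s && (j \in codom s))
     \det (mxsub s s (row_repl (Y *m X) j (row i (Y *m X))))
  = \det (X *m Y) * (Y *m invmx (X *m Y) *m X) i j.
Proof.
move=> hK.
set L1 := row_repl Y j (row i Y); set L0 := row_repl Y j 0.
have E : forall s : {ffun 'I_k -> 'I_m}, \det (mxsub s s (row_repl (Y *m X) j (row i (Y *m X))))
   = \det (colsub s X) * \det (rowsub s L1).
  by move=> s; rewrite row_mul row_repl_mul mxsub_mul det_mulmx mulrC.
under eq_bigr do rewrite E.
have S1 := cauchy_binet X L1; have S0 := cauchy_binet X L0.
rewrite (bigID (fun s : {ffun 'I_k -> 'I_m} => j \in codom s)) /= in S1.
rewrite (bigID (fun s : {ffun 'I_k -> 'I_m} => j \in codom s)) /= in S0.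
rewrite big1 ?add0r in S0; last first.
  move=> s /andP[_ /codomP [t ht]]; rewrite (@det_row0 _ (rowsub s L0) t) ?mulr0 //.
  by move=> l; rewrite !mxE /L0 /row_repl -ht eqxx.
have E0 : \sum_(s | strict_incr s && (j \notin codom s)) \det (colsub s X) * \det (rowsub s L1)
   = \sum_(s | strict_incr s && (j \notin codom s)) \det (colsub s X) * \det (rowsub s L0).
  apply: eq_bigr => s /andP[_ hj]; congr (_ * \det _); apply/matrixP => p q.
  rewrite !mxE; case: eqP => // hsp; case/negP: hj; rewrite -hsp; exact: codom_f.
have -> : \sum_(s | strict_incr s && (j \in codom s)) \det (colsub s X) * \det (rowsub s L1)
   = \det (X *m L1) - \det (X *m L0) by rewrite S1 S0 E0 addrK.
rewrite /L1 /L0 !mul_row_repl !det_rank1 // sub0r.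
rewrite -mulrBr; congr (_ * _).
have l1 : forall A B : 'M[F]_1, (A - B) 0 0 = A 0 0 - B 0 0 by move=> A B; rewrite !mxE.
have l2 : forall A : 'M[F]_1, (- A) 0 0 = - A 0 0 by move=> A; rewrite !mxE.
rewrite !mulmxBl l1 !mulNmx l2.
set a := (row i Y *m _ *m _) 0 0; set b := (row j Y *m _ *m _) 0 0.
have -> : 1 + (a - b) - (1 + - b) = a by ring.
rewrite /a !mxE; apply: eq_bigr => t _; rewrite !mxE; congr (_ * _).
by apply: eq_bigr => l _; rewrite !mxE.
Qed.

End LA.
Lemma conjT_mul (F : numClosedFieldType) m n p (A : 'M[F]_(m,n)) (B : 'M[F]_(n,p)) :
  conjT (A *m B) = conjT B *m conjT A.
Proof. by rewrite /conjT map_mxM trmx_mul. Qed.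
Lemma rank_fact (F : fieldType) m (G : 'M[F]_m) k : \rank G = k ->
  exists (Lm : 'M[F]_(m,k)) (Rm : 'M[F]_(k,m)), Lm *m Rm = G.
Proof. by move=> <-; exists (col_base G), (row_base G); exact: mulmx_base. Qed.

Theorem corollary2p3 (C : numClosedFieldType) (m n r : nat)
  (A : 'M[C]_(m, n)) (Aplus : 'M[C]_(n, m)) :
  \rank A = r ->
  ((r < minn m n)%N \/ (r = n /\ (n < m)%N)) ->
  is_MP_inverse A Aplus ->
  forall i j : 'I_m,
    (A *m Aplus) i j =
      (\sum_(s : {ffun 'I_r -> 'I_m} | strict_incr s && (j \in codom s))
          \det (mxsub s s (row_repl (A *m conjT A) j (row i (A *m conjT A)))))
      / d_r r (A *m conjT A).
Proof.
move=> hr _ [h1 h2 h3 h4] i j.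
set G := A *m conjT A; set Q := A *m Aplus; set Y := conjT Aplus *m Aplus.
have YG : Y *m G = Q.
  have -> : Y *m G = conjT Aplus *m ((Aplus *m A) *m conjT A) by rewrite /Y /G !mulmxA.
  by rewrite -h4 -conjT_mul -conjT_mul mulmxA h1 h3.
have QG : Q *m G = G by rewrite /Q /G mulmxA h1.
have rG : \rank G = r.
  apply/eqP; rewrite eqn_leq; apply/andP; split; first by rewrite -hr mxrankM_maxl.
  have eA : A = Y *m G *m A by rewrite YG /Q.
  rewrite -hr {1}eA -mulmxA; apply: leq_trans (mxrankM_maxr _ _) _.
  exact: mxrankM_maxl.
have [Lm [Rm HG]] := rank_fact rG.
have rR : row_free Rm.
  apply/eqP/eqP; rewrite eqn_leq rank_leq_row /= -{1}rG -HG; exact: mxrankM_maxr.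
set K := Rm *m Lm.
have GG : G = Y *m G *m G by rewrite YG QG.
have LYLK : Lm = Y *m Lm *m K.
  apply: (row_free_inj rR); rewrite HG {1}GG -HG /K !mulmxA.
  done.
have uK : K \in unitmx.
  rewrite -row_free_unit; apply/eqP/eqP; rewrite eqn_leq rank_leq_row /=.
  rewrite -{1}rG -HG; apply: leq_trans (mxrankM_maxl _ _) _.
  rewrite {1}LYLK; exact: mxrankM_maxr.
have QE : Q = Lm *m invmx K *m Rm.
  rewrite -YG -HG mulmxA; congr (_ *m _).
  by rewrite {2}LYLK mulmxK.
rewrite -HG num_prod // dr_prod -/K QE [\det K * _]mulrC mulfK //.
by rewrite -unitfE -unitmxE.
Qed.
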